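(* Let $\Gamma$ and $G$ be groups and suppose the projection $\mathrm{pr}\colon\Gamma\wr G\to G$ factors as $\Gamma\wr G\xrightarrow{p}H\xrightarrow{r}G$ with $p,r$ surjective homomorphisms. Let $H_1,H_2$ be normal subgroups of $H$ and write $G_i=r(H_i)$. Assume $G_1\neq1$, $G_2\neq1$, $G=G_1\times G_2$, and $[H_1,H_2]=1$. Then $\mathrm{Ker}(p)\subseteq\Gamma^G$ surjects onto $\Gamma$ under the evaluation map $e_1\colon f\mapsto f(1)$.
   Context: The wreath product is $\Gamma\wr G=\Gamma^G\rtimes G$, where $\Gamma^G$ is the group of all functions $f\colon G\to\Gamma$ and $G$ acts from the right by $f^h(g)=f(hg)$. $\mathrm{pr}\colon\Gamma\wr G\to G$, $(f,g)\mapsto g$, and $e_g\colon\Gamma^G\to\Gamma$, $f\mapsto f(g)$. *)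

(* Defs.v *)
From Stdlib Require Import FunctionalExtensionality.

Record group := Group {
  carrier :> Type;
  gmul : carrier -> carrier -> carrier;
  gone : carrier;
  ginv : carrier -> carrier;
  gmulA : forall x y z, gmul x (gmul y z) = gmul (gmul x y) z;
  gmul1l : forall x, gmul gone x = x;
  gmul1r : forall x, gmul x gone = x;
  gmulVl : forall x, gmul (ginv x) x = gone;
  gmulVr : forall x, gmul x (ginv x) = gone
}.

Arguments gmul {g}.
Arguments gone {g}.
Arguments ginv {g}.

Definition is_hom (A B : group) (f : A -> B) : Prop :=
  forall x y : A, f (gmul x y) = gmul (f x) (f y).

Definition surjective {A B : Type} (f : A -> B) : Prop :=
  forall b, exists a, f a = b.

Definition is_subgroup (A : group) (S : A -> Prop) : Prop :=
  S gone /\ (forall x y, S x -> S y -> S (gmul x y)) /\ (forall x, S x -> S (ginv x)).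

Definition is_normal (A : group) (S : A -> Prop) : Prop :=
  is_subgroup A S /\ (forall x g, S x -> S (gmul (ginv g) (gmul x g))).

Definition image {A B : Type} (f : A -> B) (S : A -> Prop) : B -> Prop :=
  fun b => exists a, S a /\ f a = b.

Definition is_trivial (A : group) (S : A -> Prop) : Prop :=
  forall x, S x <-> x = gone.

Definition internal_direct_product (A : group) (S1 S2 : A -> Prop) : Prop :=
  is_normal A S1 /\ is_normal A S2 /\
  (forall x, S1 x -> S2 x -> x = gone) /\
  (forall g : A, exists x y, S1 x /\ S2 y /\ g = gmul x y).

Definition commutator_trivial (A : group) (S1 S2 : A -> Prop) : Prop :=
  forall x y, S1 x -> S2 y ->
    gmul (gmul (ginv x) (ginv y)) (gmul x y) = gone.

(** Wreath product  Γ ≀ G = Γ^G ⋊ G  with the right action  f^h(g) = f(h g):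
    (f1, g1) (f2, g2) = (f1^{g2} f2, g1 g2). *)
Section Wreath.
Variables (Gam G : group).

Definition wr_car := ((G -> Gam) * G)%type.

Definition wr_mul (a b : wr_car) : wr_car :=
  (fun x => gmul (fst a (gmul (snd b) x)) (fst b x), gmul (snd a) (snd b)).

Definition wr_one : wr_car := (fun _ => gone, gone).

Definition wr_inv (a : wr_car) : wr_car :=
  (fun x => ginv (fst a (gmul (ginv (snd a)) x)), ginv (snd a)).

Lemma wr_mulA x y z : wr_mul x (wr_mul y z) = wr_mul (wr_mul x y) z.
Proof.
  destruct x as [f1 g1], y as [f2 g2], z as [f3 g3]; unfold wr_mul; simpl.
  f_equal; [|apply gmulA]. apply functional_extensionality; intro x.
  rewrite !gmulA. reflexivity.
Qed.

Lemma wr_mul1l x : wr_mul wr_one x = x.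
Proof.
  destruct x as [f g]; unfold wr_mul; simpl. f_equal; [|apply gmul1l].
  apply functional_extensionality; intro x. apply gmul1l.
Qed.

Lemma wr_mul1r x : wr_mul x wr_one = x.
Proof.
  destruct x as [f g]; unfold wr_mul; simpl. f_equal; [|apply gmul1r].
  apply functional_extensionality; intro x. rewrite gmul1r, gmul1l. reflexivity.
Qed.

Lemma wr_mulVl x : wr_mul (wr_inv x) x = wr_one.
Proof.
  destruct x as [f g]; unfold wr_mul, wr_inv, wr_one; simpl. f_equal; [|apply gmulVl].
  apply functional_extensionality; intro x.
  rewrite gmulA, gmulVl, gmul1l. apply gmulVl.
Qed.

Lemma wr_mulVr x : wr_mul x (wr_inv x) = wr_one.
Proof.
  destruct x as [f g]; unfold wr_mul, wr_inv, wr_one; simpl. f_equal; [|apply gmulVr].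
  apply functional_extensionality; intro x.
  apply gmulVr.
Qed.

Definition wreath : group :=
  Group wr_car wr_mul wr_one wr_inv wr_mulA wr_mul1l wr_mul1r wr_mulVl wr_mulVr.

Definition wr_pr (a : wreath) : G := snd a.

Definition wr_base (f : G -> Gam) : wreath := (f, gone).

End Wreath.

(* Main.v *)
Require Import Defs.
From Stdlib Require Import FunctionalExtensionality Classical ClassicalEpsilon.

Section GL.
Variable A : group.
Lemma mulVK (x y : A) : gmul (gmul x (ginv y)) y = x.
Proof. rewrite <- gmulA, gmulVl, gmul1r. reflexivity. Qed.
Lemma mulKV (x y : A) : gmul (gmul x y) (ginv y) = x.
Proof. rewrite <- gmulA, gmulVr, gmul1r. reflexivity. Qed.
Lemma inv1 : ginv (@gone A) = gone.
Proof. rewrite <- (gmul1l A (ginv gone)). apply gmulVr. Qed.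
Lemma mul_eq1 (a b : A) : gmul a b = gone -> a = ginv b.
Proof. intro E. rewrite <- (gmul1r A a), <- (gmulVr A b), gmulA, E, gmul1l. reflexivity. Qed.
Lemma lcancel (a b c : A) : gmul a b = gmul a c -> b = c.
Proof. intro E. rewrite <- (gmul1l A b), <- (gmul1l A c), <- (gmulVl A a), <- !gmulA, E. reflexivity. Qed.
Lemma comm1 (y : A) : gmul (ginv gone) (gmul (ginv y) (gmul gone y)) = gone.
Proof. rewrite inv1, !gmul1l. apply gmulVl. Qed.
End GL.

Lemma hom_one (A B : group) (f : A -> B) : is_hom A B f -> f gone = gone.
Proof.
  intro h. assert (E : gmul (f gone) (f gone) = gmul (f gone) gone).
  { rewrite <- h, !gmul1r. reflexivity. }
  apply lcancel in E. exact E.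
Qed.

Lemma hom_inv (A B : group) (f : A -> B) : is_hom A B f -> forall x, f (ginv x) = ginv (f x).
Proof.
  intros h x. apply mul_eq1. rewrite <- h, gmulVl. apply hom_one; auto.
Qed.

Lemma conj_base (Gam G : group) (a : G -> Gam) (g : G) (phi : G -> Gam) :
  @gmul (wreath Gam G) (ginv ((a,g) : wreath Gam G)) (gmul ((phi, gone) : wreath Gam G) (a,g))
  = ((fun x => gmul (ginv (a x)) (gmul (phi (gmul g x)) (a x)), gone) : wreath Gam G).
Proof.
  simpl. unfold wr_mul, wr_inv; simpl. f_equal.
  - apply functional_extensionality; intro x.
    rewrite (gmul1l _ g), (gmulA _ (ginv g)), (gmulVl _ g), (gmul1l _ x). reflexivity.
  - rewrite (gmul1l _ g). apply gmulVl.
Qed.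

Lemma inv_base (Gam G : group) (phi psi : G -> Gam) :
  @gmul (wreath Gam G) (ginv ((phi, gone) : wreath Gam G)) ((psi, gone) : wreath Gam G)
  = ((fun x => gmul (ginv (phi x)) (psi x), gone) : wreath Gam G).
Proof.
  simpl. unfold wr_mul, wr_inv; simpl. f_equal.
  - apply functional_extensionality; intro x.
    rewrite inv1, !gmul1l. reflexivity.
  - rewrite inv1. apply gmul1l.
Qed.

Theorem lemma5p3 (Gam G H : group)
  (p : wreath Gam G -> H) (r : H -> G)
  (hp : is_hom (wreath Gam G) H p) (hr : is_hom H G r)
  (sp : surjective p) (sr : surjective r)
  (hfac : forall w : wreath Gam G, r (p w) = wr_pr Gam G w)
  (H1 H2 : H -> Prop) (nH1 : is_normal H H1) (nH2 : is_normal H H2)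
  (G1ne : ~ is_trivial G (image r H1)) (G2ne : ~ is_trivial G (image r H2))
  (hdp : internal_direct_product G (image r H1) (image r H2))
  (hcomm : commutator_trivial H H1 H2) :
  forall gam : Gam, exists f : G -> Gam,
    p (wr_base Gam G f) = gone /\ f gone = gam.
Proof.
  intro gam.
  destruct hdp as [nG1 [nG2 [disj _]]].
  assert (ex1 : forall S, is_normal G S -> ~ is_trivial G S -> exists x, S x /\ x <> gone).
  { intros S nS nt. apply NNPP. intro C. apply nt. intro x. split.
    - intro Sx. apply NNPP. intro ne. apply C. exists x. auto.
    - intros ->. apply nS. }
  destruct (ex1 _ nG1 G1ne) as [x1 [[h1 [Hh1 rh1]] x1ne]].
  destruct (ex1 _ nG2 G2ne) as [x2 [[h2 [Hh2 rh2]] x2ne]].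
  destruct (sp h1) as [[a g1] pw1].
  destruct (sp h2) as [[b g2] pw2].
  assert (eg1 : g1 = x1). { rewrite <- rh1, <- pw1, hfac. reflexivity. }
  assert (eg2 : g2 = x2). { rewrite <- rh2, <- pw2, hfac. reflexivity. }
  subst x1 x2.
  assert (S1g1 : image r H1 g1) by (exists h1; rewrite eg1; auto).
  assert (S2g2 : image r H2 g2) by (exists h2; rewrite eg2; auto).
  rewrite <- eg1 in x1ne. rewrite <- eg2 in x2ne. clear eg1 eg2.
  set (t := gmul g1 g2).
  assert (t1 : t <> gone).
  { intro E. unfold t in E. apply mul_eq1 in E. apply x1ne. apply disj; auto. rewrite E. apply nG2. auto. }
  assert (tg1 : t <> g1).
  { intro E. apply x2ne. apply (lcancel _ g1). rewrite gmul1r. exact E. }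
  assert (tg2 : t <> g2).
  { intro E. apply x1ne. unfold t in E.
    rewrite <- (gmul1l _ g2) in E at 2.
    rewrite <- (gmul1r _ g1), <- (gmulVr _ g2), gmulA, E, gmul1l, gmulVr. reflexivity. }
  set (A := a g2). set (B := b gone).
  set (delta := gmul A (gmul B (gmul gam (gmul (ginv B) (ginv A))))).
  set (phi := fun x : G => if excluded_middle_informative (x = t) then delta else gone).
  set (u := ((phi, gone) : wreath Gam G)).
  set (w1 := ((a, g1) : wreath Gam G)).
  set (w2 := ((b, g2) : wreath Gam G)).
  set (k := gmul (ginv u) (gmul (ginv w1) (gmul u w1))).
  set (c := gmul (ginv k) (gmul (ginv w2) (gmul k w2))).
  assert (pk : H1 (p k)).
  { unfold k. rewrite !hp, !(hom_inv _ _ _ hp). replace (p w1) with h1 by (symmetry; exact pw1).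
    destruct nH1 as [[_ [cl iv]] cj].
    rewrite (gmulA _ (ginv h1)), gmulA. apply cl; auto.
    }
  assert (pc : p c = gone).
  { unfold c. rewrite !hp, !(hom_inv _ _ _ hp). replace (p w2) with h2 by (symmetry; exact pw2).
    rewrite <- (hcomm (p k) h2 pk Hh2). rewrite !gmulA. reflexivity. }
  assert (kE : k = ((fun x => gmul (ginv (phi x)) (gmul (ginv (a x)) (gmul (phi (gmul g1 x)) (a x))), gone) : wreath Gam G)).
  { unfold k, w1, u. rewrite conj_base, inv_base. reflexivity. }
  assert (cE : c = ((fun x => gmul (ginv (fst k x)) (gmul (ginv (b x)) (gmul (fst k (gmul g2 x)) (b x))), gone) : wreath Gam G)).
  { unfold c, w2. rewrite kE at 1 2. rewrite conj_base, inv_base. rewrite kE. reflexivity. }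
  exists (fst c). split.
  - unfold wr_base. rewrite <- pc. f_equal. rewrite cE. reflexivity.
  - rewrite cE. cbn [fst]. rewrite kE. cbn [fst]. rewrite !gmul1r.
    unfold phi.
    destruct (excluded_middle_informative (gone = t)) as [e|_]; [congruence|].
    destruct (excluded_middle_informative (g1 = t)) as [e|_]; [congruence|].
    destruct (excluded_middle_informative (g2 = t)) as [e|_]; [congruence|].
    destruct (excluded_middle_informative (gmul g1 g2 = t)) as [_|e]; [|exfalso; apply e; reflexivity].
    fold A B. rewrite !inv1, !gmul1l, (gmulVl _ (a gone)), inv1, gmul1l.
    fold B. unfold delta. rewrite !gmulA, ?mulVK, ?gmulVl, ?gmul1l, ?mulKV, ?mulVK, ?gmulVl, ?gmul1l. reflexivity.
Qed.
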